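(* Let $k\ge1$, let $(A,t)$ be a $\mathcal{C}_k$-algebra and let $M\subseteq A$ be a proper cyclic deductive system. The following are equivalent: (1) $M$ is maximal; (2) for every $a\notin M$ there exists $m\in M$ with $\bigwedge_{j=1}^{k}t^j(\triangle a)\wedge m=0$; (3) for all $a,b\in A$, if $\bigwedge_{j=1}^{k}t^j(\triangle a)\vee b\in M$, then $a\in M$ or $b\in M$; (4) for every $a\notin M$, $\sim\triangle\bigwedge_{j=1}^{k}t^j(a)\in M$; (5) for all $a,b\notin M$, $a\rightharpoondown b\in M$ and $b\rightharpoondown a\in M$.
   Context: A modal pseudocomplemented De Morgan algebra ($mpM$-algebra) is an algebra $\langle A,\wedge,\vee,\sim,{}^\ast,0,1\rangle$ such that $\langle A,\wedge,\vee,\sim,0,1\rangle$ is a De Morgan algebra (bounded distributive lattice with $\sim\sim x=x$, $\sim(x\vee y)=\sim x\wedge\sim y$), $x^\ast$ is the pseudocomplement of $x$, and $x\vee\sim x\le x\vee x^\ast$. Put $\nabla x=\sim(\sim x\wedge x^\ast)$, $\triangle x=\sim\nabla\sim x$. A $\mathcal{C}_k$-algebra ($k\ge1$) is a pair $(A,t)$ with $A$ an $mpM$-algebra and $t$ an $mpM$-automorphism of $A$ with $t^k=\mathrm{id}$. The cyclic implication is $a\rightharpoondown b=\bigvee_{i=1}^{k}\nabla(\sim t^i(a))\vee b$. A cyclic deductive system is a set $D\subseteq A$ with $1\in D$ such that $x,\,x\rightharpoondown y\in D$ imply $y\in D$; it is maximal if it is maximal among proper cyclic deductive systems. *)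

(* Defs.v *)
From mathcomp Require Import all_boot all_order.
Set Implicit Arguments. Unset Strict Implicit. Unset Printing Implicit Defensive.
Import Order.TTheory.
Local Open Scope order_scope.

Section MpM.
Context {disp : Order.disp_t} {T : tbDistrLatticeType disp}.

(* A De Morgan algebra expanded by a pseudocomplement, satisfying
   x \/ ~x <= x \/ x^*  : an mpM-algebra structure on the bounded distributive lattice T. *)
Record is_mpM (neg star : T -> T) : Prop := IsMpM {
  mpM_negK : forall x, neg (neg x) = x;
  mpM_negU : forall x y, neg (x `|` y) = neg x `&` neg y;
  mpM_pseudo : forall x y, (y `&` x == \bot) = (y <= star x);
  mpM_ax : forall x, x `|` neg x <= x `|` star x
}.

Definition nabla (neg star : T -> T) (x : T) : T := neg (neg x `&` star x).
Definition delta (neg star : T -> T) (x : T) : T := neg (nabla neg star (neg x)).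

Record is_Ck_aut (neg star : T -> T) (k : nat) (t : T -> T) : Prop := IsCkAut {
  aut_bij : bijective t;
  aut_meet : forall x y, t (x `&` y) = t x `&` t y;
  aut_join : forall x y, t (x `|` y) = t x `|` t y;
  aut_neg : forall x, t (neg x) = neg (t x);
  aut_star : forall x, t (star x) = star (t x);
  aut_bot : t \bot = \bot;
  aut_top : t \top = \top;
  aut_period : forall x, iter k t x = x
}.

Definition cimp (neg star : T -> T) (k : nat) (t : T -> T) (a b : T) : T :=
  (\join_(1 <= i < k.+1) nabla neg star (neg (iter i t a))) `|` b.

Definition tmeet (k : nat) (t : T -> T) (x : T) : T :=
  \meet_(1 <= j < k.+1) iter j t x.

Definition cyclic_ds (neg star : T -> T) (k : nat) (t : T -> T) (D : T -> Prop) : Prop :=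
  D \top /\ (forall x y, D x -> D (cimp neg star k t x y) -> D y).

Definition proper_ds (D : T -> Prop) : Prop := exists x, ~ D x.

Definition maximal_cds (neg star : T -> T) (k : nat) (t : T -> T) (M : T -> Prop) : Prop :=
  cyclic_ds neg star k t M /\ proper_ds M /\
  forall N : T -> Prop, cyclic_ds neg star k t N -> proper_ds N ->
    (forall x, M x -> N x) -> forall x, N x -> M x.

End MpM.

(* Main.v *)
Require Import Defs.
From Stdlib Require Import Classical.
From mathcomp Require Import all_boot all_order.
Set Implicit Arguments. Unset Strict Implicit. Unset Printing Implicit Defensive.
Import Order.TTheory.
Local Open Scope order_scope.

Definition Bool {disp : Order.disp_t} {T : tbDistrLatticeType disp} (neg : T -> T) (b : T) :=
  b `&` neg b = \bot.

Lemma negU' {disp : Order.disp_t} {T : tbDistrLatticeType disp} (neg star : T -> T)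
  (HA : is_mpM neg star) x y : neg (x `|` y) = neg x `&` neg y.
Proof. exact: mpM_negU HA x y. Qed.

Lemma negI {disp : Order.disp_t} {T : tbDistrLatticeType disp} (neg star : T -> T)
  (HA : is_mpM neg star) x y : neg (x `&` y) = neg x `|` neg y.
Proof.
by rewrite -{1}(mpM_negK HA x) -{1}(mpM_negK HA y) -(mpM_negU HA) (mpM_negK HA).
Qed.

Lemma neg_le {disp : Order.disp_t} {T : tbDistrLatticeType disp} (neg star : T -> T)
  (HA : is_mpM neg star) x y : x <= y -> neg y <= neg x.
Proof. by move=> H; rewrite -(join_r H) (mpM_negU HA) leIl. Qed.

Lemma neg_bot {disp : Order.disp_t} {T : tbDistrLatticeType disp} (neg star : T -> T)
  (HA : is_mpM neg star) : neg \bot = \top.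
Proof.
apply/eqP; rewrite eq_le lex1 /=.
have := neg_le HA (le0x (neg \top)); by rewrite (mpM_negK HA).
Qed.

Lemma neg_top {disp : Order.disp_t} {T : tbDistrLatticeType disp} (neg star : T -> T)
  (HA : is_mpM neg star) : neg \top = \bot.
Proof. by rewrite -(neg_bot HA) (mpM_negK HA). Qed.

Lemma star_meet {disp : Order.disp_t} {T : tbDistrLatticeType disp} (neg star : T -> T)
  (HA : is_mpM neg star) x : star x `&` x = \bot.
Proof. by apply/eqP; rewrite (mpM_pseudo HA). Qed.

Lemma star_anti {disp : Order.disp_t} {T : tbDistrLatticeType disp} (neg star : T -> T)
  (HA : is_mpM neg star) x y : x <= y -> star y <= star x.
Proof.
move=> H; rewrite -(mpM_pseudo HA) -lex0.
by apply: le_trans (leI2 (lexx _) H) _; rewrite (star_meet HA).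
Qed.

Lemma star_join {disp : Order.disp_t} {T : tbDistrLatticeType disp} (neg star : T -> T)
  (HA : is_mpM neg star) x y : star (x `|` y) = star x `&` star y.
Proof.
apply/le_anti/andP; split.
  by rewrite lexI !(star_anti HA) ?leUl ?leUr.
rewrite -(mpM_pseudo HA) meetUr [_ `&` x]meetAC (star_meet HA) meet0x.
by rewrite -meetA (star_meet HA) meetx0 joinx0.
Qed.

Lemma deltaE {disp : Order.disp_t} {T : tbDistrLatticeType disp} (neg star : T -> T)
  (HA : is_mpM neg star) x : delta neg star x = x `&` star (neg x).
Proof. by rewrite /delta /nabla (mpM_negK HA) (mpM_negK HA). Qed.

Lemma nablaN {disp : Order.disp_t} {T : tbDistrLatticeType disp} (neg star : T -> T)
  (HA : is_mpM neg star) x : nabla neg star (neg x) = neg (delta neg star x).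
Proof. by rewrite /delta (mpM_negK HA). Qed.

Lemma bool_join {disp : Order.disp_t} {T : tbDistrLatticeType disp} (neg star : T -> T)
  (HA : is_mpM neg star) b : Bool neg b -> b `|` neg b = \top.
Proof.
by move=> H; have := congr1 neg H; rewrite (negI HA) (mpM_negK HA) (neg_bot HA) joinC.
Qed.

Lemma bool_le {disp : Order.disp_t} {T : tbDistrLatticeType disp} (neg star : T -> T)
  (HA : is_mpM neg star) b m : Bool neg b -> m `&` b = \bot -> m <= neg b.
Proof.
by move=> Hb H; rewrite -(meetx1 m) -(bool_join HA Hb) meetUr H join0x leIr.
Qed.

Lemma delta_bool {disp : Order.disp_t} {T : tbDistrLatticeType disp} (neg star : T -> T)
  (HA : is_mpM neg star) x : Bool neg (delta neg star x).
Proof.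
rewrite /Bool (deltaE HA) (negI HA) meetUr -meetA.
have -> : star (neg x) `&` neg x = \bot by rewrite (star_meet HA).
rewrite meetx0 join0x.
have h1 : x <= neg x `|` star (neg x).
  have := mpM_ax HA (neg x); rewrite (mpM_negK HA) => h.
  exact: le_trans (leUr x (neg x)) h.
have h2 : x `&` neg (star (neg x)) <= neg x.
  by have := neg_le HA h1; rewrite (mpM_negU HA) (mpM_negK HA).
apply/eqP; rewrite -lex0 meetAC.
apply: le_trans (leI2 h2 (lexx _)) _; by rewrite meetC (star_meet HA).
Qed.

Lemma bool_meet {disp : Order.disp_t} {T : tbDistrLatticeType disp} (neg star : T -> T)
  (HA : is_mpM neg star) a b : Bool neg a -> Bool neg b -> Bool neg (a `&` b).
Proof.
rewrite /Bool => Ha Hb; rewrite (negI HA) meetUr [(a `&` b) `&` neg a]meetAC Ha meet0x.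
by rewrite join0x -meetA Hb meetx0.
Qed.

Lemma bool_top {disp : Order.disp_t} {T : tbDistrLatticeType disp} (neg star : T -> T)
  (HA : is_mpM neg star) : Bool neg \top.
Proof. by rewrite /Bool (neg_top HA) meet1x. Qed.

Lemma delta_id {disp : Order.disp_t} {T : tbDistrLatticeType disp} (neg star : T -> T)
  (HA : is_mpM neg star) b : Bool neg b -> delta neg star b = b.
Proof.
by move=> Hb; rewrite (deltaE HA); apply/meet_idPl; rewrite -(mpM_pseudo HA) Hb.
Qed.

Lemma delta_meet {disp : Order.disp_t} {T : tbDistrLatticeType disp} (neg star : T -> T)
  (HA : is_mpM neg star) x y :
  delta neg star (x `&` y) = delta neg star x `&` delta neg star y.
Proof. by rewrite !(deltaE HA) (negI HA) (star_join HA) meetACA. Qed.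

Lemma delta_top {disp : Order.disp_t} {T : tbDistrLatticeType disp} (neg star : T -> T)
  (HA : is_mpM neg star) : delta neg star \top = \top.
Proof.
rewrite (deltaE HA) (neg_top HA) meet1x.
by apply/eqP; rewrite eq_le lex1 -(mpM_pseudo HA) meetx0 eqxx.
Qed.

Lemma delta_le {disp : Order.disp_t} {T : tbDistrLatticeType disp} (neg star : T -> T)
  (HA : is_mpM neg star) x : delta neg star x <= x.
Proof. by rewrite (deltaE HA) leIl. Qed.

Lemma iter_meet {disp : Order.disp_t} {T : tbDistrLatticeType disp} (neg star : T -> T)
  k t (Ht : is_Ck_aut neg star k t) j x y :
  iter j t (x `&` y) = iter j t x `&` iter j t y.
Proof. by elim: j => //= j ->; rewrite (aut_meet Ht). Qed.

Lemma iter_neg {disp : Order.disp_t} {T : tbDistrLatticeType disp} (neg star : T -> T)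
  k t (Ht : is_Ck_aut neg star k t) j x : iter j t (neg x) = neg (iter j t x).
Proof. by elim: j => //= j ->; rewrite (aut_neg Ht). Qed.

Lemma iter_star {disp : Order.disp_t} {T : tbDistrLatticeType disp} (neg star : T -> T)
  k t (Ht : is_Ck_aut neg star k t) j x : iter j t (star x) = star (iter j t x).
Proof. by elim: j => //= j ->; rewrite (aut_star Ht). Qed.

Lemma iter_bot {disp : Order.disp_t} {T : tbDistrLatticeType disp} (neg star : T -> T)
  k t (Ht : is_Ck_aut neg star k t) j : iter j t \bot = \bot.
Proof. by elim: j => //= j ->; rewrite (aut_bot Ht). Qed.

Lemma iter_delta {disp : Order.disp_t} {T : tbDistrLatticeType disp} (neg star : T -> T)
  (HA : is_mpM neg star) k t (Ht : is_Ck_aut neg star k t) j x :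
  iter j t (delta neg star x) = delta neg star (iter j t x).
Proof. by rewrite !(deltaE HA) (iter_meet Ht) (iter_star Ht) (iter_neg Ht). Qed.

Lemma iter_le {disp : Order.disp_t} {T : tbDistrLatticeType disp} (neg star : T -> T)
  k t (Ht : is_Ck_aut neg star k t) j x y : x <= y -> iter j t x <= iter j t y.
Proof. by move=> H; rewrite -(meet_idPl H) (iter_meet Ht) leIr. Qed.

Lemma iter_bool {disp : Order.disp_t} {T : tbDistrLatticeType disp} (neg star : T -> T)
  k t (Ht : is_Ck_aut neg star k t) j b : Bool neg b -> Bool neg (iter j t b).
Proof. by rewrite /Bool -(iter_neg Ht) -(iter_meet Ht) => ->; rewrite (iter_bot Ht). Qed.

Definition cc {disp : Order.disp_t} {T : tbDistrLatticeType disp} (neg star : T -> T) k t x :=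
  tmeet k t (delta neg star x).

Lemma c_bool {disp : Order.disp_t} {T : tbDistrLatticeType disp} (neg star : T -> T)
  (HA : is_mpM neg star) k t (Ht : is_Ck_aut neg star k t) x : Bool neg (cc neg star k t x).
Proof.
rewrite /cc /tmeet; apply: (big_ind (fun z => Bool neg z)).
- exact: bool_top HA.
- by move=> a b; exact: (bool_meet HA).
- move=> i _; apply: (iter_bool Ht). exact: (delta_bool HA x).
Qed.

Lemma c_le {disp : Order.disp_t} {T : tbDistrLatticeType disp} (neg star : T -> T)
  (HA : is_mpM neg star) k (hk : (1 <= k)%N) t (Ht : is_Ck_aut neg star k t) x :
  cc neg star k t x <= x.
Proof.
rewrite /cc /tmeet big_nat_recr //= (aut_period Ht).
exact: le_trans (leIr _ _) (delta_le HA x).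
Qed.

Lemma c_mono {disp : Order.disp_t} {T : tbDistrLatticeType disp} (neg star : T -> T)
  (HA : is_mpM neg star) k t (Ht : is_Ck_aut neg star k t) x y :
  x <= y -> cc neg star k t x <= cc neg star k t y.
Proof.
move=> H; rewrite /cc /tmeet; apply/meetsP_seq => j Hj _.
apply: le_trans (meets_inf_seq _ Hj isT) _.
apply: (iter_le Ht); rewrite -(meet_idPl H) (delta_meet HA); exact: leIr.
Qed.

Lemma c_meet {disp : Order.disp_t} {T : tbDistrLatticeType disp} (neg star : T -> T)
  (HA : is_mpM neg star) k t (Ht : is_Ck_aut neg star k t) x y :
  cc neg star k t x `&` cc neg star k t y <= cc neg star k t (x `&` y).
Proof.
rewrite /cc /tmeet; apply/meetsP_seq => j Hj _.
rewrite (delta_meet HA) (iter_meet Ht).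
by apply: leI2; apply: meets_inf_seq Hj isT.
Qed.

Lemma c_idem {disp : Order.disp_t} {T : tbDistrLatticeType disp} (neg star : T -> T)
  (HA : is_mpM neg star) k (hk : (1 <= k)%N) t (Ht : is_Ck_aut neg star k t) x :
  cc neg star k t x <= cc neg star k t (cc neg star k t x).
Proof.
set c := cc neg star k t x.
have ht : c <= t c.
  rewrite {2}/c /cc /tmeet (big_morph t (aut_meet Ht) (aut_top Ht)).
  apply/meetsP_seq => j; rewrite mem_index_iota => /andP [j1 jk] _.
  rewrite -iterS.
  have [jk'|jk'] := ltnP j k.
    rewrite /c /cc /tmeet.
    by apply: (meets_inf_seq (fun j => iter j t (delta neg star x)) (x:=j.+1)); rewrite ?mem_index_iota.
  have -> : j = k by apply/eqP; rewrite eqn_leq jk' -ltnS jk.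
  rewrite iterS (aut_period Ht) -[t _]/(iter 1 t _).
  rewrite /c /cc /tmeet.
  by apply: (meets_inf_seq (fun j => iter j t (delta neg star x)) (x:=1)); rewrite ?mem_index_iota ?ltnS.
have hj : forall j, c <= iter j t c.
  elim=> //= j IH; apply: le_trans ht _.
  have := iter_le Ht 1 IH; done.
rewrite /cc /tmeet (delta_id HA (c_bool HA Ht x)).
by apply/meetsP_seq => j _ _; apply: hj.
Qed.

Lemma c_delta_tmeet {disp : Order.disp_t} {T : tbDistrLatticeType disp} (neg star : T -> T)
  (HA : is_mpM neg star) k t (Ht : is_Ck_aut neg star k t) a :
  delta neg star (tmeet k t a) = cc neg star k t a.
Proof.
rewrite /cc /tmeet (big_morph _ (delta_meet HA) (delta_top HA)).
by apply: eq_bigr => j _; rewrite (iter_delta HA Ht).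
Qed.

Lemma cimpE {disp : Order.disp_t} {T : tbDistrLatticeType disp} (neg star : T -> T)
  (HA : is_mpM neg star) k t (Ht : is_Ck_aut neg star k t) a b :
  cimp neg star k t a b = neg (cc neg star k t a) `|` b.
Proof.
rewrite /cimp /cc /tmeet (big_morph neg (negI HA) (neg_top HA)); congr (_ `|` b).
by apply: eq_bigr => i _; rewrite (nablaN HA) (iter_delta HA Ht).
Qed.

Lemma cds_up {disp : Order.disp_t} {T : tbDistrLatticeType disp} (neg star : T -> T)
  (HA : is_mpM neg star) k (hk : (1 <= k)%N) t (Ht : is_Ck_aut neg star k t) D
  (HD : cyclic_ds neg star k t D) x y : D x -> x <= y -> D y.
Proof.
move=> Dx xy; case: HD => D1 Dc; apply: (Dc x) => //.
have -> : cimp neg star k t x y = \top; last by [].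
apply/eqP; rewrite eq_le lex1 /= (cimpE HA Ht) -(bool_join HA (c_bool HA Ht x)) joinC.
by apply: leU2 => //; apply: le_trans (c_le HA hk Ht x) xy.
Qed.

Lemma cds_meet {disp : Order.disp_t} {T : tbDistrLatticeType disp} (neg star : T -> T)
  (HA : is_mpM neg star) k (hk : (1 <= k)%N) t (Ht : is_Ck_aut neg star k t) D
  (HD : cyclic_ds neg star k t D) x y : D x -> D y -> D (x `&` y).
Proof.
move=> Dx Dy; case: (HD) => D1 Dc; apply: (Dc y) => //.
apply: (cds_up HA hk Ht HD Dx).
rewrite (cimpE HA Ht) joinIr lexI leUr /=.
apply: le_trans (lex1 x) _.
rewrite -(bool_join HA (c_bool HA Ht y)) joinC.
by apply: leU2 => //; apply: (c_le HA hk Ht).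
Qed.

Lemma cds_c {disp : Order.disp_t} {T : tbDistrLatticeType disp} (neg star : T -> T)
  (HA : is_mpM neg star) k t (Ht : is_Ck_aut neg star k t) D
  (HD : cyclic_ds neg star k t D) x : D x -> D (cc neg star k t x).
Proof.
move=> Dx; case: (HD) => D1 Dc; apply: (Dc x) => //.
by rewrite (cimpE HA Ht) joinC (bool_join HA (c_bool HA Ht x)).
Qed.

Theorem theorem4p3 (disp : Order.disp_t) (T : tbDistrLatticeType disp)
  (neg star : T -> T) (HA : is_mpM neg star)
  (k : nat) (hk : (1 <= k)%N) (t : T -> T) (Ht : is_Ck_aut neg star k t)
  (M : T -> Prop) (HM : cyclic_ds neg star k t M) (HMp : proper_ds M) :
  [/\ (maximal_cds neg star k t M <->
        forall a, ~ M a -> exists2 m, M m & tmeet k t (delta neg star a) `&` m = \bot),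
      (maximal_cds neg star k t M <->
        forall a b, M (tmeet k t (delta neg star a) `|` b) -> M a \/ M b),
      (maximal_cds neg star k t M <->
        forall a, ~ M a -> M (neg (delta neg star (tmeet k t a)))) &
      (maximal_cds neg star k t M <->
        forall a b, ~ M a -> ~ M b -> M (cimp neg star k t a b) /\ M (cimp neg star k t b a))].
Proof.
set c := cc neg star k t.
have Mbot : ~ M \bot.
  move=> Mb; case: HMp => z; apply; exact: (cds_up HA hk Ht HM Mb (le0x z)).
have e12 : maximal_cds neg star k t M <->
        forall a, ~ M a -> exists2 m, M m & tmeet k t (delta neg star a) `&` m = \bot.
  split.
  - case=> _ [_ Hmax] a na.
    pose N := fun y => exists2 m, M m & c a `&` m <= y.
    have cycN : cyclic_ds neg star k t N.
      split; first by exists \top; [case: HM | exact: lex1].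
      move=> x y [m1 Hm1 le1] [m2 Hm2 le2].
      exists (c m1 `&` m2); first by apply: (cds_meet HA hk Ht HM) => //; apply: (cds_c HA Ht HM).
      rewrite (cimpE HA Ht) in le2.
      have h1 : c a `&` c m1 <= c x.
        apply: le_trans (leI2 (c_idem HA hk Ht a) (lexx _)) _.
        apply: le_trans (c_meet HA Ht _ _) _.
        exact: (c_mono HA Ht).
      apply: le_trans (_ : _ <= (c a `&` c m1) `&` (c a `&` m2)) _; first by rewrite meetACA meetxx.
      apply: le_trans (leI2 h1 le2) _.
      by rewrite meetUr (c_bool HA Ht x) join0x leIr.
    have subN : forall x, M x -> N x by move=> x Mx; exists x => //; exact: leIr.
    have Na : N a by exists \top; [case: HM | rewrite meetx1; exact: (c_le HA hk Ht)].
    have [Hp|Hnp] := classic (proper_ds N).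
      by exfalso; apply: na; exact: (Hmax N cycN Hp subN a Na).
    have : N \bot by apply: NNPP => Hb; apply: Hnp; exists \bot.
    case=> m Hm le; exists m => //; apply/eqP; rewrite -lex0; exact: le.
  - move=> H2; split; first exact: HM; split; first exact: HMp.
    move=> N HN HNp sub x Nx; apply: NNPP => nMx.
    have [m Hm E] := H2 x nMx.
    have Nb : N \bot.
      rewrite -E; apply: (cds_meet HA hk Ht HN); first exact: (cds_c HA Ht HN).
      exact: sub.
    by case: HNp => z; apply; exact: (cds_up HA hk Ht HN Nb (le0x z)).
have e23 : (forall a, ~ M a -> exists2 m, M m & tmeet k t (delta neg star a) `&` m = \bot) <->
           (forall a b, M (tmeet k t (delta neg star a) `|` b) -> M a \/ M b).
  split.
  - move=> H2 a b Hab; have [Ma|na] := classic (M a); first by left.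
    right; have [m Hm E] := H2 a na.
    apply: (cds_up HA hk Ht HM (cds_meet HA hk Ht HM Hab Hm)).
    by rewrite meetUl E join0x leIl.
  - move=> H3 a na; exists (neg (c a)); last exact: (c_bool HA Ht a).
    have := H3 a (neg (c a)); case.
      by rewrite (bool_join HA (c_bool HA Ht a)); case: HM.
      by move=> /na.
    done.
have e24 : (forall a, ~ M a -> exists2 m, M m & tmeet k t (delta neg star a) `&` m = \bot) <->
           (forall a, ~ M a -> M (neg (delta neg star (tmeet k t a)))).
  split.
  - move=> H2 a na; rewrite (c_delta_tmeet HA Ht); have [m Hm E] := H2 a na.
    apply: (cds_up HA hk Ht HM Hm); apply: (bool_le HA (c_bool HA Ht a)); by rewrite meetC.
  - move=> H4 a na; exists (neg (c a)); last exact: (c_bool HA Ht a).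
    by have := H4 a na; rewrite (c_delta_tmeet HA Ht).
have e45 : (forall a, ~ M a -> M (neg (delta neg star (tmeet k t a)))) <->
           (forall a b, ~ M a -> ~ M b -> M (cimp neg star k t a b) /\ M (cimp neg star k t b a)).
  split.
  - move=> H4 a b na nb; rewrite !(cimpE HA Ht).
    have := H4 a na; have := H4 b nb; rewrite !(c_delta_tmeet HA Ht) => hb ha.
    by split; [apply: (cds_up HA hk Ht HM ha) | apply: (cds_up HA hk Ht HM hb)]; exact: leUl.
  - move=> H5 a na; have [h _] := H5 a \bot na Mbot.
    by rewrite (cimpE HA Ht) joinx0 in h; rewrite (c_delta_tmeet HA Ht).
split.
- exact: e12.
- exact: (iff_trans e12 e23).
- exact: (iff_trans e12 e24).
- exact: (iff_trans e12 (iff_trans e24 e45)).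
Qed.
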